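(* Let $\sigma(x,y)=(x\rightharpoonup y,x\leftharpoonup y)$ be an involutive non-degenerate quiver-theoretic Yang--Baxter map on a quiver $\mathscr{A}$ over $\Lambda$, and let $\mathscr{C}=\mathscr{C}(\sigma)$ be its structure category. Then $\mathscr{C}$ is left-Ore and any two elements of $\mathscr{C}$ with the same target admit a left-lcm. Consequently the canonical functor $\mathscr{C}\to\mathrm{Env}(\mathscr{C})$ is injective, and every element of $\mathscr{C}\mathscr{C}^{-1}\subseteq\mathrm{Env}(\mathscr{C})$ admits a symmetric normal decomposition (in the sense of Dehornoy et al., Foundations of Garside theory, Ch. III) with respect to the Garside structure of $\mathscr{C}$.
   Context: A quiver over $\Lambda$ has source/target maps $\mathfrak{s},\mathfrak{t}$; $\mathscr{A}\otimes\mathscr{A}$ is the quiver of composable pairs $x|y$ ($\mathfrak{t}(x)=\mathfrak{s}(y)$). A quiver-theoretic Yang--Baxter map is a source/target-preserving map $\sigma\colon\mathscr{A}\otimes\mathscr{A}\to\mathscr{A}\otimes\mathscr{A}$ satisfying the braid relation $(\sigma\otimes\mathrm{id})(\mathrm{id}\otimes\sigma)(\sigma\otimes\mathrm{id})=(\mathrm{id}\otimes\sigma)(\sigma\otimes\mathrm{id})(\mathrm{id}\otimes\sigma)$; involutive means $\sigma^2=\mathrm{id}$; non-degenerate means all maps $x\rightharpoonup\cdot\colon\mathscr{A}(\mathfrak{t}(x),\Lambda)\to\mathscr{A}(\mathfrak{s}(x),\Lambda)$ and $\cdot\leftharpoonup y\colon\mathscr{A}(\Lambda,\mathfrak{s}(y))\to\mathscr{A}(\Lambda,\mathfrak{t}(y))$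 are bijective. $\mathscr{C}(\sigma)$ is the category presented by generators $\mathscr{A}$ and relations $x|y\sim(x\rightharpoonup y)|(x\leftharpoonup y)$. A category is left-Ore if it is (left- and right-) cancellative and any two elements with the same target have a common left-multiple $ux=vy$. A left-lcm of $x,y$ is a common left-multiple right-dividing every common left-multiple. $\mathrm{Env}(\mathscr{C})$ is the enveloping groupoid: the groupoid with a functor $\iota\colon\mathscr{C}\to\mathrm{Env}(\mathscr{C})$ through which every functor from $\mathscr{C}$ to a groupoid factors uniquely. *)

(* Defs.v *)
(* Composition is written in DIAGRAMMATIC order throughout, as in the paper:
   x|y composable means t(x) = s(y), and "f g" means f followed by g. *)
From Stdlib Require Import List Relations.
Import ListNotations.

Record quiver := Quiver {
  qobj : Type;
  qarr : Type;
  qsrc : qarr -> qobj;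
  qtgt : qarr -> qobj
}.
Arguments qsrc {q} _.
Arguments qtgt {q} _.

Definition composable {Q : quiver} (x y : qarr Q) : Prop := qtgt x = qsrc y.

(* A map sigma : A (x) A -> A (x) A is given by its two components
   sigma(x,y) = (lact x y, ract x y) = (x -> y, x <- y); only their values on
   composable pairs matter. *)
Section YB.
Variables (Q : quiver) (lact ract : qarr Q -> qarr Q -> qarr Q).

(* sigma maps composable pairs to composable pairs and preserves source and
   target of the quiver A (x) A (source of x|y is s(x), target is t(y)). *)
Definition st_preserving : Prop :=
  forall x y : qarr Q, composable x y ->
    qsrc (lact x y) = qsrc x /\
    composable (lact x y) (ract x y) /\
    qtgt (ract x y) = qtgt y.

(* (sigma (x) id)(id (x) sigma)(sigma (x) id) = (id (x) sigma)(sigma (x) id)(id (x) sigma)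
   on composable triples x|y|z. *)
Definition braid_relation : Prop :=
  forall x y z : qarr Q, composable x y -> composable y z ->
    let a := lact x y in let b := ract x y in
    let c := lact y z in let d := ract y z in
    (lact a (lact b z), ract a (lact b z), ract b z)
    = (lact x c, lact (ract x c) d, ract (ract x c) d).

Definition involutive : Prop :=
  forall x y : qarr Q, composable x y ->
    lact (lact x y) (ract x y) = x /\ ract (lact x y) (ract x y) = y.

Definition nondegenerate : Prop :=
  (forall x : qarr Q,
     (forall y1 y2, qsrc y1 = qtgt x -> qsrc y2 = qtgt x ->
        lact x y1 = lact x y2 -> y1 = y2) /\
     (forall z, qsrc z = qsrc x -> exists y, qsrc y = qtgt x /\ lact x y = z)) /\
  (forall y : qarr Q,
     (forall x1 x2, qtgt x1 = qsrc y -> qtgt x2 = qsrc y ->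
        ract x1 y = ract x2 y -> x1 = x2) /\
     (forall z, qtgt z = qtgt y -> exists x, qtgt x = qsrc y /\ ract x y = z)).

Definition involutive_nondegenerate_YB_map : Prop :=
  st_preserving /\ braid_relation /\ involutive /\ nondegenerate.

(* The structure category C(sigma): morphisms are paths of the quiver
   (words with explicit endpoints) modulo the congruence generated by
   x|y ~ (x -> y)|(x <- y).                                             *)
Record word := W { wsrc : qobj Q; warr : list (qarr Q); wtgt : qobj Q }.

Fixpoint is_path (a : qobj Q) (l : list (qarr Q)) (b : qobj Q) : Prop :=
  match l with
  | [] => a = b
  | x :: l' => qsrc x = a /\ is_path (qtgt x) l' b
  end.

Definition valid (w : word) : Prop := is_path (wsrc w) (warr w) (wtgt w).

Definition idw (a : qobj Q) : word := W a [] a.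

(* composition, f then g (meaningful when wtgt f = wsrc g) *)
Definition cat (f g : word) : word := W (wsrc f) (warr f ++ warr g) (wtgt g).

Inductive rel_step : word -> word -> Prop :=
  | rel_step_intro : forall (a b : qobj Q) (p q : list (qarr Q)) (x y : qarr Q),
      composable x y ->
      rel_step (W a (p ++ x :: y :: q) b) (W a (p ++ lact x y :: ract x y :: q) b).

Definition eqC : word -> word -> Prop := clos_refl_sym_trans word rel_step.

Definition left_mult (h f : word) : Prop :=
  exists u, valid u /\ wtgt u = wsrc f /\ eqC (cat u f) h.

Definition left_div (f h : word) : Prop :=
  exists g, valid g /\ wtgt f = wsrc g /\ eqC (cat f g) h.

Definition left_cancellative : Prop :=
  forall f g g', valid f -> valid g -> valid g' ->
    wtgt f = wsrc g -> wtgt f = wsrc g' ->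
    eqC (cat f g) (cat f g') -> eqC g g'.

Definition right_cancellative : Prop :=
  forall f g g', valid f -> valid g -> valid g' ->
    wtgt g = wsrc f -> wtgt g' = wsrc f ->
    eqC (cat g f) (cat g' f) -> eqC g g'.

Definition left_Ore : Prop :=
  left_cancellative /\ right_cancellative /\
  (forall f g, valid f -> valid g -> wtgt f = wtgt g ->
     exists u v, valid u /\ valid v /\ wtgt u = wsrc f /\ wtgt v = wsrc g /\
       eqC (cat u f) (cat v g)).

Definition left_lcm (h f g : word) : Prop :=
  valid h /\ left_mult h f /\ left_mult h g /\
  (forall h', valid h' -> left_mult h' f -> left_mult h' g -> left_mult h' h).

Definition invertible (f : word) : Prop :=
  valid f /\ exists g, valid g /\ wtgt f = wsrc g /\ wtgt g = wsrc f /\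
    eqC (cat f g) (idw (wsrc f)) /\ eqC (cat g f) (idw (wsrc g)).

Definition subfamily (S : word -> Prop) : Prop :=
  (forall w, S w -> valid w) /\ (forall w w', S w -> eqC w w' -> S w').

Definition S_sharp (S : word -> Prop) (f : word) : Prop :=
  valid f /\
  ((exists s e, S s /\ invertible e /\ wtgt s = wsrc e /\ eqC (cat s e) f)
   \/ invertible f).

Definition S_greedy (S : word -> Prop) (g1 g2 : word) : Prop :=
  forall s f, S s -> valid f -> wtgt f = wsrc g1 ->
    left_div s (cat f (cat g1 g2)) -> left_div s (cat f g1).

Fixpoint C_path (a : qobj Q) (ls : list word) (b : qobj Q) : Prop :=
  match ls with
  | [] => a = b
  | g :: ls' => valid g /\ wsrc g = a /\ C_path (wtgt g) ls' b
  end.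

Fixpoint eval_path (a : qobj Q) (ls : list word) : word :=
  match ls with
  | [] => idw a
  | g :: ls' => cat g (eval_path (wtgt g) ls')
  end.

Fixpoint all_greedy (S : word -> Prop) (ls : list word) : Prop :=
  match ls with
  | g1 :: ((g2 :: _) as ls') => S_greedy S g1 g2 /\ all_greedy S ls'
  | _ => True
  end.

Definition S_normal (S : word -> Prop) (ls : list word) : Prop :=
  Forall (S_sharp S) ls /\ all_greedy S ls.

Definition garside_family (S : word -> Prop) : Prop :=
  forall g, valid g ->
    exists ls, C_path (wsrc g) ls (wtgt g) /\ S_normal S ls /\
      eqC (eval_path (wsrc g) ls) g.

Definition left_disjoint (f g : word) : Prop :=
  wsrc f = wsrc g /\
  forall h h', valid h -> valid h' -> wtgt h = wsrc f ->
    left_div h' (cat h f) -> left_div h' (cat h g) -> left_div h' h.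

Definition first_entry (x : qobj Q) (ls : list word) : word :=
  match ls with [] => idw x | g :: _ => g end.

(* the negative-positive path  t_q^-1|...|t_1^-1|s_1|...|s_p  (ts = [t_1;...;t_q],
   ss = [s_1;...;s_p], both starting at x) is symmetric S-normal *)
Definition sym_S_normal (S : word -> Prop) (x : qobj Q) (ts ss : list word) : Prop :=
  S_normal S ts /\ S_normal S ss /\
  left_disjoint (first_entry x ts) (first_entry x ss).

End YB.

Record groupoid := Groupoid {
  gobj : Type;
  gmor : Type;
  gdom : gmor -> gobj;
  gcod : gmor -> gobj;
  gid : gobj -> gmor;
  gcomp : gmor -> gmor -> gmor;        (* gcomp f g = f followed by g *)
  ginv : gmor -> gmor;
  gid_dom : forall a, gdom (gid a) = a;
  gid_cod : forall a, gcod (gid a) = a;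
  gcomp_dom : forall f g, gcod f = gdom g -> gdom (gcomp f g) = gdom f;
  gcomp_cod : forall f g, gcod f = gdom g -> gcod (gcomp f g) = gcod g;
  gid_l : forall f, gcomp (gid (gdom f)) f = f;
  gid_r : forall f, gcomp f (gid (gcod f)) = f;
  gassoc : forall f g h, gcod f = gdom g -> gcod g = gdom h ->
             gcomp (gcomp f g) h = gcomp f (gcomp g h);
  ginv_dom : forall f, gdom (ginv f) = gcod f;
  ginv_cod : forall f, gcod (ginv f) = gdom f;
  ginv_r : forall f, gcomp f (ginv f) = gid (gdom f);
  ginv_l : forall f, gcomp (ginv f) f = gid (gcod f)
}.

Record gfun (G H : groupoid) := GFun {
  gf0 : gobj G -> gobj H;
  gf1 : gmor G -> gmor H
}.
Arguments gf0 {G H} _ _.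
Arguments gf1 {G H} _ _.

Definition is_gfunctor {G H : groupoid} (P : gfun G H) : Prop :=
  (forall m, gdom H (gf1 P m) = gf0 P (gdom G m)) /\
  (forall m, gcod H (gf1 P m) = gf0 P (gcod G m)) /\
  (forall a, gf1 P (gid G a) = gid H (gf0 P a)) /\
  (forall f g, gcod G f = gdom G g ->
     gf1 P (gcomp G f g) = gcomp H (gf1 P f) (gf1 P g)).

(* functors from the structure category C(sigma) to a groupoid,
   given on representatives *)
Record cfun (Q : quiver) (G : groupoid) := CFun {
  cf0 : qobj Q -> gobj G;
  cf1 : word Q -> gmor G
}.
Arguments cf0 {Q G} _ _.
Arguments cf1 {Q G} _ _.

Definition is_cfunctor (Q : quiver) (lact ract : qarr Q -> qarr Q -> qarr Q)
    {G : groupoid} (F : cfun Q G) : Prop :=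
  (forall w, valid Q w -> gdom G (cf1 F w) = cf0 F (wsrc Q w)) /\
  (forall w, valid Q w -> gcod G (cf1 F w) = cf0 F (wtgt Q w)) /\
  (forall w w', valid Q w -> valid Q w' -> eqC Q lact ract w w' ->
     cf1 F w = cf1 F w') /\
  (forall a, cf1 F (idw Q a) = gid G (cf0 F a)) /\
  (forall f g, valid Q f -> valid Q g -> wtgt Q f = wsrc Q g ->
     cf1 F (cat Q f g) = gcomp G (cf1 F f) (cf1 F g)).

Definition is_enveloping (Q : quiver) (lact ract : qarr Q -> qarr Q -> qarr Q)
    (G : groupoid) (iota : cfun Q G) : Prop :=
  is_cfunctor Q lact ract iota /\
  forall (H : groupoid) (F : cfun Q H), is_cfunctor Q lact ract F ->
    (exists P : gfun G H, is_gfunctor P /\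
       (forall a, gf0 P (cf0 iota a) = cf0 F a) /\
       (forall w, valid Q w -> gf1 P (cf1 iota w) = cf1 F w)) /\
    (forall P P' : gfun G H, is_gfunctor P -> is_gfunctor P' ->
       (forall a, gf0 P (cf0 iota a) = cf0 F a) ->
       (forall w, valid Q w -> gf1 P (cf1 iota w) = cf1 F w) ->
       (forall a, gf0 P' (cf0 iota a) = cf0 F a) ->
       (forall w, valid Q w -> gf1 P' (cf1 iota w) = cf1 F w) ->
       (forall a, gf0 P a = gf0 P' a) /\ (forall m, gf1 P m = gf1 P' m)).

Definition injective_cfun (Q : quiver) (lact ract : qarr Q -> qarr Q -> qarr Q)
    {G : groupoid} (iota : cfun Q G) : Prop :=
  forall f g, valid Q f -> valid Q g -> cf1 iota f = cf1 iota g ->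
    eqC Q lact ract f g.

(* Main.v *)
Require Import Defs.
From Stdlib Require Import List Relations Permutation ZArith Lia Classical ClassicalEpsilon ProofIrrelevance FunctionalExtensionality PropExtensionality.
Import ListNotations.

Lemma is_path_app {Q : quiver} a l1 l2 b :
  is_path Q a (l1 ++ l2) b <-> exists c, is_path Q a l1 c /\ is_path Q c l2 b.
Proof.
  revert a; induction l1 as [|x l1 IH]; intros a; simpl.
  - split; [intros H; exists a; auto | intros [c [-> H]]; auto].
  - split.
    + intros [Hs H]. apply IH in H as [c [H1 H2]]. exists c; auto.
    + intros [c [[Hs H1] H2]]. split; auto. apply IH; eauto.
Qed.

Lemma is_path_fun {Q : quiver} a l b b' : is_path Q a l b -> is_path Q a l b' -> b = b'.
Proof.
  revert a; induction l as [|x l IH]; simpl; intros a H1 H2.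
  - congruence.
  - destruct H1, H2; eauto.
Qed.

Lemma rs_inv {Q : quiver} la ra w w' : rel_step Q la ra w w' ->
  wsrc Q w = wsrc Q w' /\ wtgt Q w = wtgt Q w' /\ length (warr Q w) = length (warr Q w').
Proof.
  intros []; simpl; rewrite !length_app; simpl; auto.
Qed.

Lemma eqC_inv {Q : quiver} la ra w w' : eqC Q la ra w w' ->
  wsrc Q w = wsrc Q w' /\ wtgt Q w = wtgt Q w' /\ length (warr Q w) = length (warr Q w').
Proof.
  induction 1 as [x y H| | |]; [apply (rs_inv la ra); auto | auto | intuition congruence | intuition congruence].
Qed.

Lemma rs_valid {Q : quiver} la ra w w' : st_preserving Q la ra -> rel_step Q la ra w w' ->
  (valid Q w <-> valid Q w').
Proof.
  intros Hst []. unfold valid; simpl.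
  rewrite !is_path_app. simpl.
  destruct (Hst x y H) as [H1 [H2 H3]].
  split; intros [c [Hp [Hx [Hy Hq]]]]; exists c; split; auto.
  - split; [congruence|]. split; [|congruence]. auto.
  - split; [congruence|]. split; [|congruence]. red in H; congruence.
Qed.

Lemma eqC_valid {Q : quiver} la ra w w' : st_preserving Q la ra -> eqC Q la ra w w' ->
  (valid Q w <-> valid Q w').
Proof.
  intros Hst. induction 1 as [x y H| | |].
  - apply (rs_valid la ra); auto.
  - tauto.
  - tauto.
  - tauto.
Qed.

Lemma eqC_refl {Q : quiver} la ra w : eqC Q la ra w w.
Proof. apply rst_refl. Qed.
Lemma eqC_sym {Q : quiver} la ra w w' : eqC Q la ra w w' -> eqC Q la ra w' w.
Proof. apply rst_sym. Qed.
Lemma eqC_trans {Q : quiver} la ra w1 w2 w3 : eqC Q la ra w1 w2 -> eqC Q la ra w2 w3 -> eqC Q la ra w1 w3.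
Proof. apply rst_trans. Qed.

Lemma eqC_catl {Q : quiver} la ra h g g' : eqC Q la ra g g' -> eqC Q la ra (cat Q h g) (cat Q h g').
Proof.
  induction 1 as [x y H| | |].
  - apply rst_step. destruct H. unfold cat; simpl.
    rewrite !app_assoc. constructor; auto.
  - apply rst_refl.
  - apply rst_sym; auto.
  - eapply rst_trans; eauto.
Qed.

Lemma eqC_catr {Q : quiver} la ra h g g' : eqC Q la ra g g' -> eqC Q la ra (cat Q g h) (cat Q g' h).
Proof.
  induction 1 as [x y H| | |].
  - apply rst_step. destruct H. unfold cat; simpl.
    rewrite <- !app_assoc. simpl. constructor; auto.
  - apply rst_refl.
  - apply rst_sym; auto.
  - eapply rst_trans; eauto.
Qed.

Lemma cat_assoc {Q : quiver} f g h : cat Q (cat Q f g) h = cat Q f (cat Q g h).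
Proof. unfold cat; simpl; rewrite app_assoc; auto. Qed.

Lemma valid_cat {Q : quiver} f g : valid Q f -> valid Q g -> wtgt Q f = wsrc Q g -> valid Q (cat Q f g).
Proof.
  unfold valid, cat; simpl; intros Hf Hg E. apply is_path_app. exists (wtgt Q f); split; auto.
  rewrite E; auto.
Qed.

Lemma valid_cat_inv {Q : quiver} f g : valid Q (cat Q f g) -> valid Q f -> wtgt Q f = wsrc Q g -> valid Q g.
Proof.
  unfold valid, cat; simpl; intros H Hf E. apply is_path_app in H as [c [H1 H2]].
  rewrite <- E. rewrite (is_path_fun _ _ _ _ Hf H1). auto.
Qed.

Lemma word_eta {Q : quiver} (w : word Q) : w = W Q (wsrc Q w) (warr Q w) (wtgt Q w).
Proof. destruct w; auto. Qed.

Fixpoint pi {Q : quiver} (la : qarr Q -> qarr Q -> qarr Q) (l : list (qarr Q)) : list (qarr Q) :=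
  match l with [] => [] | x :: u => x :: map (la x) (pi la u) end.

Fixpoint sig {Q : quiver} (la : qarr Q -> qarr Q -> qarr Q) (l : list (qarr Q)) (z : qarr Q) : qarr Q :=
  match l with [] => z | x :: u => la x (sig la u z) end.

Lemma pi_app {Q : quiver} la (p r : list (qarr Q)) : pi la (p ++ r) = pi la p ++ map (sig la p) (pi la r).
Proof.
  induction p as [|x p IH]; simpl.
  - rewrite map_id; auto.
  - rewrite IH, map_app, map_map; auto.
Qed.

Lemma pi_length {Q : quiver} la (l : list (qarr Q)) : length (pi la l) = length l.
Proof. induction l; simpl; rewrite ?length_map; auto. Qed.

Definition YB {Q : quiver} la ra := involutive_nondegenerate_YB_map Q la ra.

Lemma YB_st {Q : quiver} la ra : YB la ra -> st_preserving Q la ra.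
Proof. intros H; apply H. Qed.

Lemma pi_src {Q : quiver} la ra : YB la ra -> forall a l b z,
  is_path Q a l b -> In z (pi la l) -> qsrc z = a.
Proof.
  intros HY a l; revert a; induction l as [|x u IH]; simpl; intros a b z Hp Hz; [tauto|].
  destruct Hp as [Hs Hp]. destruct Hz as [<- | Hz]; auto.
  apply in_map_iff in Hz as [w [<- Hw]].
  specialize (IH _ _ _ Hp Hw).
  destruct (YB_st _ _ HY x w (eq_sym IH)) as [H1 _]. congruence.
Qed.

Lemma sig_src {Q : quiver} la ra : YB la ra -> forall a l b z,
  is_path Q a l b -> qsrc z = b -> qsrc (sig la l z) = a.
Proof.
  intros HY a l; revert a; induction l as [|x u IH]; simpl; intros a b z Hp Hz; [congruence|].
  destruct Hp as [Hs Hp]. specialize (IH _ _ _ Hp Hz).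
  destruct (YB_st _ _ HY x (sig la u z) (eq_sym IH)) as [H1 _]. congruence.
Qed.

Lemma sig_inj {Q : quiver} la ra : YB la ra -> forall a l b z1 z2,
  is_path Q a l b -> qsrc z1 = b -> qsrc z2 = b -> sig la l z1 = sig la l z2 -> z1 = z2.
Proof.
  intros HY a l; revert a; induction l as [|x u IH]; simpl; intros a b z1 z2 Hp H1 H2 E; auto.
  destruct Hp as [Hs Hp]. pose proof HY as [_ [_ [_ [HN _]]]].
  apply (IH _ _ _ _ Hp H1 H2).
  apply (proj1 (HN x)); auto; eapply sig_src; eauto.
Qed.

Lemma sig_surj {Q : quiver} la ra : YB la ra -> forall a l b y,
  is_path Q a l b -> qsrc y = a -> exists z, qsrc z = b /\ sig la l z = y.
Proof.
  intros HY a l; revert a; induction l as [|x u IH]; simpl; intros a b y Hp Hy.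
  - exists y; split; congruence.
  - destruct Hp as [Hs Hp]. pose proof HY as [_ [_ [_ [HN _]]]].
    destruct (proj2 (HN x) y) as [z1 [Hz1 E]]; [congruence|].
    destruct (IH _ _ _ Hp Hz1) as [z [Hz E2]]. exists z; split; auto. congruence.
Qed.

Lemma map_inj_on {A B} (f : A -> B) (l1 l2 : list A) :
  (forall a b, In a l1 -> In b l2 -> f a = f b -> a = b) -> map f l1 = map f l2 -> l1 = l2.
Proof.
  revert l2; induction l1 as [|x l1 IH]; intros [|y l2] Hi E; simpl in *; try discriminate; auto.
  injection E as E1 E2. f_equal; auto.
Qed.

Lemma perm_map_inj {A B} (f : A -> B) (l1 l2 : list A) :
  (forall a b, In a l1 -> In b l2 -> f a = f b -> a = b) ->
  Permutation (map f l1) (map f l2) -> Permutation l1 l2.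
Proof.
  intros Hi P. apply Permutation_map_inv in P as [l3 [E P]].
  apply map_inj_on in E.
  - subst; symmetry; auto.
  - intros a b Ha Hb. apply Hi; auto. eapply Permutation_in; [symmetry|]; eauto.
Qed.

Lemma pi_rs {Q : quiver} la ra : YB la ra -> forall w w', rel_step Q la ra w w' -> valid Q w ->
  Permutation (pi la (warr Q w)) (pi la (warr Q w')).
Proof.
  intros HY w w' [a b p q x y Hxy] Hv. unfold valid in Hv; simpl in *.
  rewrite !pi_app. apply Permutation_app_head. apply Permutation_map.
  apply is_path_app in Hv as [c [_ [Hx [Hy Hq]]]].
  pose proof HY as [Hst [Hbr [Hinv _]]].
  simpl. destruct (Hinv x y Hxy) as [E1 E2]. rewrite E1.
  rewrite !map_map.
  replace (map (fun z => la (la x y) (la (ra x y) z)) (pi la q))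
     with (map (fun z => la x (la y z)) (pi la q)).
  - apply perm_swap.
  - apply map_ext_in. intros z Hz.
    pose proof (pi_src la ra HY _ _ _ _ Hq Hz) as Hs.
    specialize (Hbr x y z Hxy (eq_sym Hs)). simpl in Hbr. injection Hbr; auto.
Qed.

Lemma pi_eqC {Q : quiver} la ra : YB la ra -> forall w w', eqC Q la ra w w' -> valid Q w ->
  Permutation (pi la (warr Q w)) (pi la (warr Q w')).
Proof.
  intros HY. induction 1 as [x y H| | x y H IH | x y z H1 IH1 H2 IH2]; intros Hv.
  - eapply pi_rs; eauto.
  - auto.
  - symmetry. apply IH. apply (eqC_valid la ra x y (YB_st _ _ HY) H); auto.
  - etransitivity; [apply IH1; auto|]. apply IH2.
    apply (eqC_valid la ra x y (YB_st _ _ HY) H1); auto.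
Qed.

Lemma eqC_cons {Q : quiver} la ra a x l b l' b' :
  eqC Q la ra (W Q (qtgt x) l b) (W Q (qtgt x) l' b') ->
  eqC Q la ra (W Q a (x :: l) b) (W Q a (x :: l') b').
Proof.
  intros H. apply (eqC_catl la ra (W Q a [x] (qtgt x))) in H. exact H.
Qed.

Lemma divD {Q : quiver} la ra : YB la ra -> forall l a b y,
  is_path Q a l b -> In y (pi la l) ->
  exists v, eqC Q la ra (W Q a l b) (W Q a (y :: v) b).
Proof.
  intros HY l; induction l as [|x u IH]; simpl; intros a b y Hp Hy; [tauto|].
  destruct Hp as [Hs Hp]. destruct Hy as [<- | Hy].
  - exists u; apply eqC_refl.
  - apply in_map_iff in Hy as [z [<- Hz]].
    destruct (IH _ _ _ Hp Hz) as [v Hv].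
    pose proof (pi_src la ra HY _ _ _ _ Hp Hz) as Hzs.
    exists (ra x z :: v).
    eapply eqC_trans; [apply eqC_cons; exact Hv|].
    apply rst_step. apply (rel_step_intro Q la ra a b [] v x z). red; auto.
Qed.

Lemma pi_inj_n {Q : quiver} la ra : YB la ra -> forall n l l' a b b',
  length l = n -> is_path Q a l b -> is_path Q a l' b' ->
  Permutation (pi la l) (pi la l') -> eqC Q la ra (W Q a l b) (W Q a l' b').
Proof.
  intros HY n; induction n as [|n IH]; intros l l' a b b' Hn Hp Hp' P.
  - destruct l; [|discriminate]. simpl in P. apply Permutation_nil in P.
    destruct l'; [|discriminate]. simpl in *. subst. apply eqC_refl.
  - destruct l as [|x u]; [discriminate|]. simpl in Hn.
    assert (Hx : In x (pi la l')) by (eapply Permutation_in; [exact P| left; auto]).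
    destruct (divD la ra HY _ _ _ _ Hp' Hx) as [v Hv].
    pose proof (pi_eqC la ra HY _ _ Hv Hp') as P2. simpl in P2.
    pose proof (eqC_valid la ra _ _ (YB_st _ _ HY) Hv) as Vv. unfold valid in Vv; simpl in Vv.
    apply Vv in Hp'. clear Vv. destruct Hp' as [_ Hpv].
    destruct Hp as [Hs Hpu].
    assert (P3 : Permutation (map (la x) (pi la u)) (map (la x) (pi la v))).
    { apply (Permutation_cons_inv (a := x)). simpl in P. rewrite P; auto. }
    apply perm_map_inj in P3.
    + eapply eqC_trans; [|apply eqC_sym; exact Hv].
      apply eqC_cons. apply IH; auto.
    + intros c d Hc Hd E. pose proof HY as [_ [_ [_ [HN _]]]].
      apply (proj1 (HN x)); auto; [eapply (pi_src la ra HY); [exact Hpu|exact Hc] | eapply (pi_src la ra HY); [exact Hpv|exact Hd]].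
Qed.

Lemma pi_inj {Q : quiver} la ra : YB la ra -> forall w w',
  valid Q w -> valid Q w' -> wsrc Q w = wsrc Q w' ->
  Permutation (pi la (warr Q w)) (pi la (warr Q w')) -> eqC Q la ra w w'.
Proof.
  intros HY [a l b] [a' l' b'] Hv Hv' E P; simpl in *; subst.
  eapply pi_inj_n; eauto.
Qed.

Lemma pi_cat {Q : quiver} la (f g : word Q) :
  pi la (warr Q (cat Q f g)) = pi la (warr Q f) ++ map (sig la (warr Q f)) (pi la (warr Q g)).
Proof. apply pi_app. Qed.

Lemma left_cancel {Q : quiver} la ra : YB la ra -> left_cancellative Q la ra.
Proof.
  intros HY f g g' Hf Hg Hg' E1 E2 E.
  pose proof (pi_eqC la ra HY _ _ E (valid_cat f g Hf Hg E1)) as P.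
  rewrite !pi_cat in P. apply Permutation_app_inv_l in P.
  apply perm_map_inj in P.
  - apply pi_inj; auto. congruence.
  - intros c d Hc Hd. eapply (sig_inj la ra HY _ _ _ c d Hf).
    + rewrite E1. exact (pi_src la ra HY _ _ _ _ Hg Hc).
    + rewrite E2. exact (pi_src la ra HY _ _ _ _ Hg' Hd).
Qed.

Definition sub {A} (l1 l2 : list A) := exists e, Permutation l2 (l1 ++ e).

Lemma div_sub {Q : quiver} la ra : YB la ra -> forall f w, valid Q f ->
  left_div Q la ra f w -> sub (pi la (warr Q f)) (pi la (warr Q w)).
Proof.
  intros HY f w Hf [g [Hg [E1 E]]].
  pose proof (pi_eqC la ra HY _ _ E (valid_cat f g Hf Hg E1)) as P.
  rewrite pi_cat in P. eexists; symmetry; exact P.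
Qed.

Lemma sub_div {Q : quiver} la ra : YB la ra -> forall l a c w, is_path Q a l c ->
  valid Q w -> wsrc Q w = a -> sub (pi la l) (pi la (warr Q w)) -> left_div Q la ra (W Q a l c) w.
Proof.
  intros HY l; induction l as [|x u IH]; intros a c w Hp Hw Ew [e Pe].
  - simpl in Hp; destruct w as [a' l' b']; simpl in *; subst.
    eexists; split; [exact Hw|]; split; [reflexivity|]; apply eqC_refl.
  - destruct w as [a' l' b']; simpl in *; subst a'. destruct Hp as [Hs Hp].
    assert (Hx : In x (pi la l')) by (eapply Permutation_in; [symmetry; exact Pe| left; auto]).
    destruct (divD la ra HY _ _ _ _ Hw Hx) as [v Hv].
    pose proof (pi_eqC la ra HY _ _ Hv Hw) as P2. simpl in P2.
    pose proof (eqC_valid la ra _ _ (YB_st _ _ HY) Hv) as Vv. unfold valid in Vv; simpl in Vv.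
    pose proof Hw as Hw'. apply Vv in Hw'. clear Vv. destruct Hw' as [_ Hpv].
    assert (P3 : Permutation (map (la x) (pi la u) ++ e) (map (la x) (pi la v))).
    { symmetry. apply (Permutation_cons_inv (a := x)). rewrite <- P2. exact Pe. }
    apply Permutation_map_inv in P3 as [l3 [E3 P3]].
    symmetry in E3. apply map_eq_app in E3 as [l1 [l2 [-> [E4 E5]]]].
    apply map_inj_on in E4.
    2:{ intros c1 d1 Hc Hd E. pose proof HY as [_ [_ [_ [HN _]]]].
        apply (proj1 (HN x)); auto.
        - eapply (pi_src la ra HY); [exact Hpv|]. eapply Permutation_in; [symmetry; exact P3|].
          apply in_or_app; auto.
        - eapply (pi_src la ra HY); [exact Hp|exact Hd]. }
    subst l1.
    destruct (IH (qtgt x) c (W Q (qtgt x) v b') Hp Hpv eq_refl) as [g [Hg [Eg E]]].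
    { exists l2; exact P3. }
    exists g; split; auto; split; auto.
    eapply eqC_trans; [|apply eqC_sym; exact Hv].
    apply (eqC_catl la ra (W Q a [x] (qtgt x))) in E. exact E.
Qed.

Lemma pi_surj {Q : quiver} la ra : YB la ra -> forall a (M : list (qarr Q)),
  (forall z, In z M -> qsrc z = a) -> exists l b, is_path Q a l b /\ Permutation (pi la l) M.
Proof.
  intros HY a M; induction M as [|y M IH]; intros HM.
  - exists [], a; simpl; auto.
  - destruct IH as [l [b [Hp P]]]; [intros; apply HM; right; auto|].
    destruct (sig_surj la ra HY _ _ _ y Hp (HM y (or_introl eq_refl))) as [z [Hz E]].
    exists (l ++ [z]), (qtgt z). split.
    + apply is_path_app. exists b; simpl; auto.
    + rewrite pi_app. simpl. rewrite E. rewrite P. symmetry. apply Permutation_cons_append.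
Qed.

Lemma multiset_max {A} (l1 l2 : list A) : exists m,
  sub l1 m /\ sub l2 m /\ (forall z, In z m -> In z l1 \/ In z l2) /\
  (forall d, sub l1 d -> sub l2 d -> sub m d).
Proof.
  revert l2; induction l1 as [|x l1 IH]; intros l2.
  - exists l2. split; [exists l2; auto|]. split; [exists []; rewrite app_nil_r; auto|].
    split; auto.
  - destruct (classic (In x l2)) as [Hin | Hnin].
    + apply in_split in Hin as [p [q ->]].
      destruct (IH (p ++ q)) as [m [[e1 H1] [[e2 H2] [H3 H4]]]].
      exists (x :: m). split; [|split; [|split]].
      * exists e1; simpl; auto.
      * exists e2. simpl. rewrite H2, <- !app_assoc. simpl. apply Permutation_middle.
      * intros z [<-|Hz]; [left; left; auto|]. destruct (H3 z Hz) as [?|Hz']; [left; right; auto|].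
        right. apply in_app_or in Hz'. apply in_or_app. simpl. tauto.
      * intros d [f1 F1] [f2 F2].
        assert (Hs : sub m (l1 ++ f1)).
        { apply H4; [exists f1; auto|]. exists f2.
          apply (Permutation_cons_inv (a := x)).
          rewrite <- F1. rewrite F2. simpl. symmetry. rewrite app_comm_cons.
          rewrite Permutation_middle. auto. }
        destruct Hs as [g G]. exists g. rewrite F1. simpl. rewrite G. auto.
    + destruct (IH l2) as [m [[e1 H1] [[e2 H2] [H3 H4]]]].
      exists (x :: m). split; [|split; [|split]].
      * exists e1; simpl; auto.
      * exists (x :: e2). rewrite <- Permutation_middle. auto.
      * intros z [<-|Hz]; [left; left; auto|]. destruct (H3 z Hz); [left; right|right]; auto.
      * intros d [f1 F1] [f2 F2].
        assert (Hxf : In x f2).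
        { assert (In x (l2 ++ f2)) by (rewrite <- F2, F1; left; auto).
          apply in_app_or in H; tauto. }
        apply in_split in Hxf as [p [q ->]].
        assert (Hs : sub m (l1 ++ f1)).
        { apply H4; [exists f1; auto|]. exists (p ++ q).
          apply (Permutation_cons_inv (a := x)).
          rewrite <- F1. rewrite F2.
          transitivity (l2 ++ x :: p ++ q).
          { apply Permutation_app_head. symmetry. apply Permutation_middle. }
          symmetry; apply Permutation_middle. }
        destruct Hs as [g G]. exists g. rewrite F1. simpl. rewrite G. auto.
Qed.

Lemma sub_src {Q : quiver} la ra : YB la ra -> forall (f : word Q), valid Q f ->
  forall z, In z (pi la (warr Q f)) -> qsrc z = wsrc Q f.
Proof. intros HY [a l b] Hf z Hz. eapply (pi_src la ra HY); eauto. Qed.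

Lemma build_word {Q : quiver} la ra : YB la ra -> forall a (M : list (qarr Q)),
  (forall z, In z M -> qsrc z = a) -> exists w, valid Q w /\ wsrc Q w = a /\ Permutation (pi la (warr Q w)) M.
Proof.
  intros HY a M HM. destruct (pi_surj la ra HY a M HM) as [l [b [Hp P]]].
  exists (W Q a l b); auto.
Qed.

Lemma sub_perm {A} (l1 l2 l3 : list A) : sub l1 l2 -> Permutation l2 l3 -> sub l1 l3.
Proof. intros [e P] P2. exists e. rewrite <- P2; auto. Qed.

Lemma sub_trans {A} (l1 l2 l3 : list A) : sub l1 l2 -> sub l2 l3 -> sub l1 l3.
Proof. intros [e P] [e' P']. exists (e ++ e'). rewrite P', P, app_assoc; auto. Qed.

Lemma right_lcm {Q : quiver} la ra : YB la ra -> forall f g : word Q,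
  valid Q f -> valid Q g -> wsrc Q f = wsrc Q g ->
  exists h, valid Q h /\ left_div Q la ra f h /\ left_div Q la ra g h /\
    forall h', valid Q h' -> left_div Q la ra f h' -> left_div Q la ra g h' -> left_div Q la ra h h'.
Proof.
  intros HY f g Hf Hg E.
  destruct (multiset_max (pi la (warr Q f)) (pi la (warr Q g))) as [m [S1 [S2 [S3 S4]]]].
  destruct (build_word la ra HY (wsrc Q f) m) as [w [Hw [Ew Pw]]].
  { intros z Hz. destruct (S3 z Hz).
    - eapply sub_src; eauto.
    - rewrite E. eapply sub_src; eauto. }
  assert (Dv : forall k, valid Q k -> wsrc Q k = wsrc Q f -> sub (pi la (warr Q k)) m -> left_div Q la ra k w).
  { intros [a l b] Hk Ek Sk. simpl in Ek. subst a. apply (sub_div la ra HY); auto.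
    eapply sub_perm; eauto. symmetry; auto. }
  exists w. split; auto. split; [|split].
  - apply Dv; auto.
  - apply Dv; auto.
  - intros h' Hh' D1 D2.
    assert (Es : wsrc Q h' = wsrc Q w).
    { destruct D1 as [u [_ [_ Eu]]]. apply eqC_inv in Eu. simpl in Eu. rewrite Ew. symmetry; apply Eu. }
    destruct w as [a l b]; simpl in *. subst a.
    apply (sub_div la ra HY); auto.
    apply sub_trans with m; [exists []; rewrite app_nil_r; symmetry; exact Pw|].
    apply S4; eapply div_sub; eauto.
Qed.

Lemma right_common {Q : quiver} la ra : YB la ra -> forall f g : word Q,
  valid Q f -> valid Q g -> wsrc Q f = wsrc Q g ->
  exists f' g', valid Q f' /\ valid Q g' /\ wtgt Q f = wsrc Q f' /\ wtgt Q g = wsrc Q g' /\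
     eqC Q la ra (cat Q f f') (cat Q g g').
Proof.
  intros HY f g Hf Hg E.
  destruct (right_lcm la ra HY f g Hf Hg E) as [h [_ [[f' [H1 [H2 H3]]] [[g' [H4 [H5 H6]]] _]]]].
  exists f', g'. repeat split; auto. eapply eqC_trans; [exact H3|]. apply eqC_sym; auto.
Qed.

Definition Qop (Q : quiver) : quiver := Quiver (qobj Q) (qarr Q) (@qtgt Q) (@qsrc Q).
Definition lop {Q : quiver} (ra : qarr Q -> qarr Q -> qarr Q) : qarr (Qop Q) -> qarr (Qop Q) -> qarr (Qop Q) :=
  fun x y => ra y x.
Definition rop {Q : quiver} (la : qarr Q -> qarr Q -> qarr Q) : qarr (Qop Q) -> qarr (Qop Q) -> qarr (Qop Q) :=
  fun x y => la y x.
Definition rw {Q : quiver} (w : word Q) : word (Qop Q) := W (Qop Q) (wtgt Q w) (rev (warr Q w)) (wsrc Q w).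
Definition unrw {Q : quiver} (u : word (Qop Q)) : word Q := W Q (wtgt _ u) (rev (warr _ u)) (wsrc _ u).

Lemma unrw_rw {Q : quiver} (w : word Q) : unrw (rw w) = w.
Proof. destruct w; unfold unrw, rw; simpl; rewrite rev_involutive; auto. Qed.
Lemma rw_unrw {Q : quiver} (u : word (Qop Q)) : rw (unrw u) = u.
Proof. destruct u; unfold unrw, rw; simpl; rewrite rev_involutive; auto. Qed.

Lemma YB_op {Q : quiver} la ra : YB la ra -> YB (Q := Qop Q) (lop ra) (rop la).
Proof.
  intros [Hst [Hbr [Hinv [HN1 HN2]]]]. unfold lop, rop.
  split; [|split; [|split]].
  - intros x y Hxy. red in Hxy; simpl in Hxy.
    destruct (Hst y x (eq_sym Hxy)) as [H1 [H2 H3]]. unfold composable in *; simpl.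
    split; [|split]; auto.
  - intros x y z Hxy Hyz. red in Hxy, Hyz; simpl in Hxy, Hyz. simpl.
    specialize (Hbr z y x (eq_sym Hyz) (eq_sym Hxy)). simpl in Hbr.
    injection Hbr as B1 B2 B3.
    f_equal; [f_equal|]; congruence.
  - intros x y Hxy. red in Hxy; simpl in Hxy.
    destruct (Hinv y x (eq_sym Hxy)) as [I1 I2]. split; auto.
  - split.
    + intros x. destruct (HN2 x) as [A B]. split.
      * intros y1 y2 E1 E2 E. apply A; auto.
      * intros z Ez. destruct (B z Ez) as [y [Ey Eyz]]. exists y; auto.
    + intros y. destruct (HN1 y) as [A B]. split.
      * intros x1 x2 E1 E2 E. apply A; auto.
      * intros z Ez. destruct (B z Ez) as [x [Ex Exz]]. exists x; auto.
Qed.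

Lemma is_path_rev {Q : quiver} a l b : is_path Q a l b -> is_path (Qop Q) b (rev l) a.
Proof.
  revert a; induction l as [|x l IH]; intros a H; [simpl in *; auto|].
  destruct H as [Hs H]. cbn [rev]. apply (proj2 (is_path_app (Q := Qop Q) _ _ _ _)).
  exists (qtgt x). split; [apply IH; exact H|]. simpl. split; [reflexivity|exact Hs].
Qed.

Lemma is_path_unrev {Q : quiver} a l b : is_path (Qop Q) b l a -> is_path Q a (rev l) b.
Proof.
  revert b; induction l as [|x l IH]; intros b H; [simpl in *; auto|].
  destruct H as [Hs H]. cbn [rev]. apply (proj2 (is_path_app (Q := Q) _ _ _ _)).
  exists (@qsrc Q x). split; [apply IH; exact H|]. simpl. split; [reflexivity|exact Hs].
Qed.

Lemma valid_rw {Q : quiver} (w : word Q) : valid Q w -> valid (Qop Q) (rw w).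
Proof. destruct w; unfold valid, rw; simpl; apply is_path_rev. Qed.
Lemma valid_unrw {Q : quiver} (u : word (Qop Q)) : valid (Qop Q) u -> valid Q (unrw u).
Proof. destruct u; unfold valid, unrw; simpl; apply is_path_unrev. Qed.

Lemma eqC_rw {Q : quiver} la ra (w w' : word Q) : eqC Q la ra w w' -> eqC (Qop Q) (lop ra) (rop la) (rw w) (rw w').
Proof.
  induction 1 as [x y H| | |].
  - apply rst_step. destruct H as [a b p q x y Hxy]. unfold rw; simpl.
    rewrite !rev_app_distr. simpl. rewrite <- !app_assoc. simpl.
    apply (rel_step_intro (Qop Q) (lop ra) (rop la) b a (rev q) (rev p) y x).
    red; simpl; auto.
  - apply rst_refl.
  - apply rst_sym; auto.
  - eapply rst_trans; eauto.
Qed.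

Lemma eqC_unrw {Q : quiver} la ra (u u' : word (Qop Q)) : eqC (Qop Q) (lop ra) (rop la) u u' -> eqC Q la ra (unrw u) (unrw u').
Proof.
  induction 1 as [x y H| | |].
  - apply rst_step. destruct H as [a b p q x y Hxy]. unfold unrw; simpl.
    rewrite !rev_app_distr. simpl. rewrite <- !app_assoc. simpl.
    apply (rel_step_intro Q la ra b a (rev q) (rev p) y x).
    red in Hxy |- *; simpl in *; auto.
  - apply rst_refl.
  - apply rst_sym; auto.
  - eapply rst_trans; eauto.
Qed.

Lemma rw_cat {Q : quiver} (f g : word Q) : rw (cat Q f g) = cat (Qop Q) (rw g) (rw f).
Proof. unfold rw, cat; simpl. rewrite rev_app_distr; auto. Qed.
Lemma unrw_cat {Q : quiver} (f g : word (Qop Q)) : unrw (cat (Qop Q) f g) = cat Q (unrw g) (unrw f).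
Proof. unfold unrw, cat; simpl. rewrite rev_app_distr; auto. Qed.

Lemma div_op_mult {Q : quiver} la ra (f h : word Q) :
  left_div (Qop Q) (lop ra) (rop la) (rw f) (rw h) -> left_mult Q la ra h f.
Proof.
  intros [g [Hg [E1 E2]]]. exists (unrw g). split; [apply valid_unrw; auto|]. split.
  - unfold unrw; simpl. rewrite <- E1. auto.
  - apply eqC_unrw in E2. rewrite unrw_cat, !unrw_rw in E2. auto.
Qed.

Lemma mult_div_op {Q : quiver} la ra (f h : word Q) :
  left_mult Q la ra h f -> left_div (Qop Q) (lop ra) (rop la) (rw f) (rw h).
Proof.
  intros [u [Hu [E1 E2]]]. exists (rw u). split; [apply valid_rw; auto|]. split.
  - unfold rw; simpl. auto.
  - apply (eqC_rw la ra) in E2. rewrite rw_cat in E2. auto.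
Qed.

Lemma right_cancel {Q : quiver} la ra : YB la ra -> right_cancellative Q la ra.
Proof.
  intros HY f g g' Hf Hg Hg' E1 E2 E.
  apply (eqC_rw la ra) in E. rewrite !rw_cat in E.
  apply (left_cancel _ _ (YB_op la ra HY)) in E; try apply valid_rw; auto.
  - apply eqC_unrw in E. rewrite !unrw_rw in E. auto.
Qed.

Lemma left_common {Q : quiver} la ra : YB la ra -> forall f g : word Q,
  valid Q f -> valid Q g -> wtgt Q f = wtgt Q g ->
  exists u v, valid Q u /\ valid Q v /\ wtgt Q u = wsrc Q f /\ wtgt Q v = wsrc Q g /\
     eqC Q la ra (cat Q u f) (cat Q v g).
Proof.
  intros HY f g Hf Hg E.
  destruct (right_common _ _ (YB_op la ra HY) (rw f) (rw g)) as [f' [g' [H1 [H2 [H3 [H4 H5]]]]]];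
    try apply valid_rw; auto.
  exists (unrw f'), (unrw g'). split; [apply valid_unrw; auto|]. split; [apply valid_unrw; auto|].
  split; [unfold unrw; simpl; rewrite <- H3; auto|].
  split; [unfold unrw; simpl; rewrite <- H4; auto|].
  apply eqC_unrw in H5. rewrite !unrw_cat, !unrw_rw in H5. auto.
Qed.

Lemma left_lcm_ex {Q : quiver} la ra : YB la ra -> forall f g : word Q,
  valid Q f -> valid Q g -> wtgt Q f = wtgt Q g -> exists h, left_lcm Q la ra h f g.
Proof.
  intros HY f g Hf Hg E.
  destruct (right_lcm _ _ (YB_op la ra HY) (rw f) (rw g)) as [h [Hh [D1 [D2 D3]]]];
    try apply valid_rw; auto.
  exists (unrw h). split; [apply valid_unrw; auto|].
  split; [apply div_op_mult; rewrite rw_unrw; auto|].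
  split; [apply div_op_mult; rewrite rw_unrw; auto|].
  intros h' Hh' M1 M2. apply div_op_mult. rewrite rw_unrw. apply D3.
  - apply valid_rw; auto.
  - apply mult_div_op; auto.
  - apply mult_div_op; auto.
Qed.

Definition Yf {Q : quiver} (a : qobj Q) (m : qarr Q -> Z) : Prop := forall z, qsrc z <> a -> m z = 0%Z.

Record HM (Q : quiver) := MkHM {
  hd : qobj Q; hc : qobj Q;
  hR : (qarr Q -> Z) -> (qarr Q -> Z) -> Prop;
  hR_dom : forall m m', hR m m' -> Yf hc m /\ Yf hd m';
  hR_fun : forall m m1 m2, hR m m1 -> hR m m2 -> m1 = m2;
  hR_inj : forall m1 m2 m', hR m1 m' -> hR m2 m' -> m1 = m2;
  hR_tot : forall m, Yf hc m -> exists m', hR m m';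
  hR_sur : forall m', Yf hd m' -> exists m, hR m m'
}.
Arguments hd {Q} _. Arguments hc {Q} _. Arguments hR {Q} _ _ _.

Lemma HM_eq {Q} (f g : HM Q) : hd f = hd g -> hc f = hc g ->
  (forall m m', hR f m m' <-> hR g m m') -> f = g.
Proof.
  destruct f as [d1 c1 R1 a1 b1 c1' d1' e1], g as [d2 c2 R2 a2 b2 c2' d2' e2]; simpl.
  intros -> -> H.
  assert (R1 = R2) by (apply functional_extensionality; intros m;
    apply functional_extensionality; intros m'; apply propositional_extensionality; auto).
  subst R2. f_equal; apply proof_irrelevance.
Qed.

Definition hid {Q} (a : qobj Q) : HM Q.
Proof.
  refine (MkHM Q a a (fun m m' => Yf a m /\ m' = m) _ _ _ _ _).
  - intros m m' [H ->]; auto.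
  - intros m m1 m2 [_ ->] [_ ->]; auto.
  - intros m1 m2 m' [_ ->] [_ ->]; auto.
  - intros m H; exists m; auto.
  - intros m H; exists m; auto.
Defined.

Definition hinv {Q} (f : HM Q) : HM Q.
Proof.
  refine (MkHM Q (hc f) (hd f) (fun m m' => hR f m' m) _ _ _ _ _).
  - intros m m' H. destruct (hR_dom _ f _ _ H); auto.
  - intros m m1 m2 H1 H2. eapply hR_inj; eauto.
  - intros m1 m2 m' H1 H2. eapply hR_fun; eauto.
  - intros m H. apply (hR_sur _ f); auto.
  - intros m H. apply (hR_tot _ f); auto.
Defined.

Definition hcomp0 {Q} (f g : HM Q) (e : hc f = hd g) : HM Q.
Proof.
  refine (MkHM Q (hd f) (hc g) (fun m m'' => exists m', hR g m m' /\ hR f m' m'') _ _ _ _ _).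
  - intros m m'' [m' [H1 H2]]. split; [apply (hR_dom _ g _ _ H1)|apply (hR_dom _ f _ _ H2)].
  - intros m m1 m2 [a [A1 A2]] [b [B1 B2]].
    pose proof (hR_fun _ g _ _ _ A1 B1); subst b. eapply hR_fun; eauto.
  - intros m1 m2 m' [a [A1 A2]] [b [B1 B2]].
    pose proof (hR_inj _ f _ _ _ A2 B2); subst b. eapply hR_inj; eauto.
  - intros m H. destruct (hR_tot _ g m H) as [m' H1].
    destruct (hR_tot _ f m') as [m'' H2].
    + rewrite e. apply (hR_dom _ g _ _ H1).
    + exists m'', m'; auto.
  - intros m'' H. destruct (hR_sur _ f m'' H) as [m' H1].
    destruct (hR_sur _ g m') as [m H2].
    + rewrite <- e. apply (hR_dom _ f _ _ H1).
    + exists m, m'; auto.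
Defined.

Definition hcomp {Q} (f g : HM Q) : HM Q :=
  match excluded_middle_informative (hc f = hd g) with
  | left e => hcomp0 f g e
  | right _ => f
  end.

Lemma hcomp_R {Q} (f g : HM Q) : hc f = hd g ->
  hd (hcomp f g) = hd f /\ hc (hcomp f g) = hc g /\
  forall m m'', hR (hcomp f g) m m'' <-> exists m', hR g m m' /\ hR f m' m''.
Proof.
  intros e. unfold hcomp. destruct (excluded_middle_informative (hc f = hd g)) as [e'|n]; [|contradiction].
  simpl. split; auto. split; auto. tauto.
Qed.

Definition HG (Q : quiver) : groupoid.
Proof.
  refine (Groupoid (qobj Q) (HM Q) hd hc hid hcomp hinv _ _ _ _ _ _ _ _ _ _ _).
  - intros a; reflexivity.
  - intros a; reflexivity.
  - intros f g e. apply (hcomp_R f g e).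
  - intros f g e. apply (hcomp_R f g e).
  - intros f. destruct (hcomp_R (hid (hd f)) f eq_refl) as [A [B C]].
    apply HM_eq; auto. intros m m''. rewrite C. simpl. split.
    + intros [m' [H1 [_ ->]]]; auto.
    + intros H. exists m''. split; auto. split; auto. apply (hR_dom _ f _ _ H).
  - intros f. destruct (hcomp_R f (hid (hc f)) eq_refl) as [A [B C]].
    apply HM_eq; auto. intros m m''. rewrite C. simpl. split.
    + intros [m' [[_ ->] H1]]; auto.
    + intros H. exists m. split; auto. split; auto. apply (hR_dom _ f _ _ H).
  - intros f g h e1 e2.
    destruct (hcomp_R f g e1) as [A1 [B1 C1]].
    destruct (hcomp_R g h e2) as [A2 [B2 C2]].
    destruct (hcomp_R (hcomp f g) h ltac:(congruence)) as [A3 [B3 C3]].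
    destruct (hcomp_R f (hcomp g h) ltac:(congruence)) as [A4 [B4 C4]].
    apply HM_eq; [congruence|congruence|]. intros m m'''.
    rewrite C3, C4. setoid_rewrite C1. setoid_rewrite C2. firstorder.
  - intros f; reflexivity.
  - intros f; reflexivity.
  - intros f. destruct (hcomp_R f (hinv f) eq_refl) as [A [B C]].
    apply HM_eq; auto. intros m m''. rewrite C. simpl. split.
    + intros [m' [H1 H2]]. pose proof (hR_fun _ f _ _ _ H1 H2); subst. split; auto.
      apply (hR_dom _ f _ _ H1).
    + intros [H ->]. destruct (hR_sur _ f m H) as [m' H1]. exists m'; auto.
  - intros f. destruct (hcomp_R (hinv f) f eq_refl) as [A [B C]].
    apply HM_eq; auto. intros m m''. rewrite C. simpl. split.
    + intros [m' [H1 H2]]. pose proof (hR_inj _ f _ _ _ H1 H2); subst. split; auto.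
      apply (hR_dom _ f _ _ H1).
    + intros [H ->]. destruct (hR_tot _ f m H) as [m' H1]. exists m'; auto.
Defined.

Definition dec (P : Prop) : bool := if excluded_middle_informative P then true else false.
Definition ind (P : Prop) : Z := if excluded_middle_informative P then 1%Z else 0%Z.

Definition iot {Q : quiver} (la : qarr Q -> qarr Q -> qarr Q) (x z : qarr Q) : qarr Q :=
  epsilon (inhabits x) (fun y => qsrc y = qtgt x /\ la x y = z).

Lemma iot_spec {Q : quiver} la ra : YB la ra -> forall (x z : qarr Q), qsrc z = qsrc x ->
  qsrc (iot la x z) = qtgt x /\ la x (iot la x z) = z.
Proof.
  intros [_ [_ [_ [HN _]]]] x z Hz. unfold iot. apply epsilon_spec.
  destruct (proj2 (HN x) z Hz) as [y Hy]. exists y; auto.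
Qed.

Lemma iot_uniq {Q : quiver} la ra : YB la ra -> forall (x y : qarr Q), qsrc y = qtgt x ->
  iot la x (la x y) = y.
Proof.
  intros HY x y Hy. pose proof HY as [Hst [_ [_ [HN _]]]].
  destruct (Hst x y (eq_sym Hy)) as [Hs _].
  destruct (iot_spec la ra HY x (la x y) Hs) as [A B].
  apply (proj1 (HN x)); auto.
Qed.

Definition Phix {Q : quiver} la (x : qarr Q) (m : qarr Q -> Z) : qarr Q -> Z :=
  fun z => if excluded_middle_informative (qsrc z = qsrc x)
           then (ind (z = x) + m (iot la x z))%Z else 0%Z.

Fixpoint Phi {Q : quiver} la (l : list (qarr Q)) (m : qarr Q -> Z) : qarr Q -> Z :=
  match l with [] => m | x :: u => Phix la x (Phi la u m) end.

Lemma Phi_app {Q : quiver} la (p r : list (qarr Q)) m : Phi la (p ++ r) m = Phi la p (Phi la r m).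
Proof. induction p; simpl; congruence. Qed.

Lemma Phix_Y {Q : quiver} la (x : qarr Q) m : Yf (qsrc x) (Phix la x m).
Proof. intros z Hz. unfold Phix. destruct excluded_middle_informative; tauto. Qed.

Lemma Phi_Y {Q : quiver} la : forall a l b (m : qarr Q -> Z), is_path Q a l b -> Yf b m -> Yf a (Phi la l m).
Proof.
  intros a l; revert a; induction l as [|x u IH]; simpl; intros a b m Hp Hm.
  - subst; auto.
  - destruct Hp as [<- _]. apply Phix_Y.
Qed.

Lemma Phix_inj {Q : quiver} la ra : YB la ra -> forall (x : qarr Q) m1 m2,
  Yf (qtgt x) m1 -> Yf (qtgt x) m2 -> Phix la x m1 = Phix la x m2 -> m1 = m2.
Proof.
  intros HY x m1 m2 H1 H2 E. apply functional_extensionality. intros y.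
  destruct (excluded_middle_informative (qsrc y = qtgt x)) as [e|n].
  2:{ rewrite H1, H2; auto. }
  pose proof HY as [Hst _]. destruct (Hst x y (eq_sym e)) as [Hs _].
  apply (f_equal (fun f => f (la x y))) in E. unfold Phix in E.
  destruct excluded_middle_informative; [|contradiction].
  rewrite (iot_uniq la ra HY x y e) in E. lia.
Qed.

Lemma Phix_sur {Q : quiver} la ra : YB la ra -> forall (x : qarr Q) m',
  Yf (qsrc x) m' -> exists m, Yf (qtgt x) m /\ Phix la x m = m'.
Proof.
  intros HY x m' H.
  exists (fun y => if excluded_middle_informative (qsrc y = qtgt x)
           then (m' (la x y) - ind (la x y = x))%Z else 0%Z).
  split.
  - intros y Hy. destruct excluded_middle_informative; tauto.
  - apply functional_extensionality. intros z. unfold Phix.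
    destruct (excluded_middle_informative (qsrc z = qsrc x)) as [e|n].
    + destruct (iot_spec la ra HY x z e) as [A B].
      destruct excluded_middle_informative; [|contradiction]. rewrite B. lia.
    + rewrite H; auto.
Qed.

Lemma Phi_inj {Q : quiver} la ra : YB la ra -> forall a l b (m1 m2 : qarr Q -> Z), is_path Q a l b ->
  Yf b m1 -> Yf b m2 -> Phi la l m1 = Phi la l m2 -> m1 = m2.
Proof.
  intros HY a l; revert a; induction l as [|x u IH]; simpl; intros a b m1 m2 Hp H1 H2 E; auto.
  destruct Hp as [_ Hp]. apply (IH _ _ _ _ Hp H1 H2).
  eapply (Phix_inj la ra HY x); eauto; eapply Phi_Y; eauto.
Qed.

Lemma Phi_sur {Q : quiver} la ra : YB la ra -> forall a l b (m' : qarr Q -> Z), is_path Q a l b ->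
  Yf a m' -> exists m, Yf b m /\ Phi la l m = m'.
Proof.
  intros HY a l; revert a; induction l as [|x u IH]; simpl; intros a b m' Hp H.
  - subst. exists m'; auto.
  - destruct Hp as [<- Hp]. destruct (Phix_sur la ra HY x m' H) as [m1 [Y1 E1]].
    destruct (IH _ _ m1 Hp Y1) as [m [Y E]]. exists m; split; auto. congruence.
Qed.

Lemma ind_iff (P P' : Prop) : (P <-> P') -> ind P = ind P'.
Proof.
  intros H. unfold ind. destruct (excluded_middle_informative P), (excluded_middle_informative P'); tauto.
Qed.

Lemma Phi_rel {Q : quiver} la ra : YB la ra -> forall (x y : qarr Q) m, composable x y -> Yf (qtgt y) m ->
  Phix la x (Phix la y m) = Phix la (la x y) (Phix la (ra x y) m).
Proof.
  intros HY x y m Hxy Hm. pose proof HY as [Hst [Hbr [Hinv [HN _]]]].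
  destruct (Hst x y Hxy) as [S1 [S2 S3]]. destruct (Hinv x y Hxy) as [I1 I2].
  set (a := la x y) in *. set (b := ra x y) in *.
  apply functional_extensionality. intros z. unfold Phix.
  destruct (excluded_middle_informative (qsrc z = qsrc x)) as [e|n];
  destruct (excluded_middle_informative (qsrc z = qsrc a)) as [e'|n']; try congruence.
  destruct (iot_spec la ra HY x z e) as [A1 A2].
  destruct (iot_spec la ra HY a z e') as [B1 B2].
  destruct (excluded_middle_informative (qsrc (iot la x z) = qsrc y)) as [e1|n1]; [|congruence].
  destruct (excluded_middle_informative (qsrc (iot la a z) = qsrc b)) as [e2|n2].
  2:{ exfalso. apply n2. rewrite B1. red in S2. congruence. }
  destruct (iot_spec la ra HY y (iot la x z) e1) as [C1 C2].
  set (w := iot la y (iot la x z)) in *.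
  assert (Ew : iot la b (iot la a z) = w).
  { assert (Hb : qsrc (la b w) = qtgt a).
    { destruct (Hst b w) as [T _]. red. rewrite C1, S3. auto. rewrite T. auto. }
    assert (E1 : iot la a z = la b w).
    { apply (proj1 (HN a)); auto. rewrite B2.
      specialize (Hbr x y w Hxy (eq_sym C1)). simpl in Hbr. injection Hbr as Hb1 _ _.
      fold a b in Hb1. rewrite Hb1. rewrite C2, A2. auto. }
    rewrite E1. apply (iot_uniq la ra HY). rewrite C1, S3; auto. }
  rewrite Ew.
  assert (ind (z = x) + ind (iot la x z = y) = ind (z = a) + ind (iot la a z = b))%Z.
  { rewrite (ind_iff (iot la x z = y) (z = a)).
    2:{ split; intros H.
        - unfold a. rewrite <- H. auto.
        - rewrite H. apply (iot_uniq la ra HY). red in Hxy; auto. }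
    rewrite (ind_iff (iot la a z = b) (z = x)).
    2:{ split; intros H.
        - rewrite <- I1. rewrite <- H. auto.
        - rewrite H. rewrite <- I1 at 1. apply (iot_uniq la ra HY). auto. }
    lia. }
  lia.
Qed.

Lemma Phi_rs {Q : quiver} la ra : YB la ra -> forall w w', rel_step Q la ra w w' -> valid Q w ->
  forall m, Yf (wtgt Q w) m -> Phi la (warr Q w) m = Phi la (warr Q w') m.
Proof.
  intros HY w w' [a b p q x y Hxy] Hv m Hm. unfold valid in Hv; simpl in *.
  rewrite !Phi_app. f_equal. simpl.
  apply is_path_app in Hv as [c [_ [Hx [Hy Hq]]]].
  apply (Phi_rel la ra HY); auto. eapply Phi_Y; eauto.
Qed.

Lemma Phi_eqC {Q : quiver} la ra : YB la ra -> forall w w', eqC Q la ra w w' -> valid Q w ->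
  forall m, Yf (wtgt Q w) m -> Phi la (warr Q w) m = Phi la (warr Q w') m.
Proof.
  intros HY. induction 1 as [x y H| | x y H IH | x y z H1 IH1 H2 IH2]; intros Hv m Hm.
  - eapply Phi_rs; eauto.
  - auto.
  - symmetry. apply IH.
    + apply (eqC_valid la ra x y (YB_st _ _ HY) H); auto.
    + destruct (eqC_inv la ra x y H) as [_ [E _]]. rewrite E; auto.
  - rewrite (IH1 Hv m Hm). apply IH2.
    + apply (eqC_valid la ra x y (YB_st _ _ HY) H1); auto.
    + destruct (eqC_inv la ra x y H1) as [_ [E _]]. rewrite <- E; auto.
Qed.

Definition deq {Q : quiver} (x y : qarr Q) : {x = y} + {x <> y} := excluded_middle_informative (x = y).

Lemma count_map {Q : quiver} la ra : YB la ra -> forall (x z : qarr Q) L,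
  (forall y, In y L -> qsrc y = qtgt x) -> qsrc z = qsrc x ->
  count_occ deq (map (la x) L) z = count_occ deq L (iot la x z).
Proof.
  intros HY x z L; induction L as [|y L IH]; intros HL Hz; simpl; auto.
  destruct (iot_spec la ra HY x z Hz) as [A B].
  assert (Hy : qsrc y = qtgt x) by (apply HL; left; auto).
  rewrite IH; [| intros; apply HL; right; auto | auto].
  destruct (deq (la x y) z) as [e|n]; destruct (deq y (iot la x z)) as [e'|n']; auto.
  - exfalso; apply n'. rewrite <- e. symmetry. apply (iot_uniq la ra HY); auto.
  - exfalso; apply n. rewrite e'. auto.
Qed.

Lemma Phi0 {Q : quiver} la ra : YB la ra -> forall a l b, is_path Q a l b ->
  Phi la l (fun _ => 0%Z) = (fun z => Z.of_nat (count_occ deq (pi la l) z)).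
Proof.
  intros HY a l; revert a; induction l as [|x u IH]; intros a b Hp; simpl; auto.
  destruct Hp as [Hs Hp]. rewrite (IH _ _ Hp).
  apply functional_extensionality; intros z. unfold Phix.
  destruct (excluded_middle_informative (qsrc z = qsrc x)) as [e|n].
  - rewrite (count_map la ra HY x z (pi la u)); auto.
    + unfold ind. destruct (excluded_middle_informative (z = x)), (deq x z); try congruence; lia.
    + intros y Hy. eapply (pi_src la ra HY); eauto.
  - destruct (deq x z); [congruence|].
    rewrite (proj1 (count_occ_not_In deq _ _)); auto. intros Hz. apply in_map_iff in Hz as [y [<- Hy]].
    apply n. pose proof (pi_src la ra HY _ _ _ _ Hp Hy).
    pose proof HY as [Hst _]. destruct (Hst x y (eq_sym H)); auto.
Qed.

Definition mkF {Q : quiver} (la ra : qarr Q -> qarr Q -> qarr Q) (HY : YB la ra) (w : word Q) (Hw : valid Q w) : HM Q.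
Proof.
  refine (MkHM Q (wsrc Q w) (wtgt Q w) (fun m m' => Yf (wtgt Q w) m /\ m' = Phi la (warr Q w) m) _ _ _ _ _).
  - intros m m' [H ->]. split; auto. eapply Phi_Y; eauto.
  - intros m m1 m2 [_ ->] [_ ->]; auto.
  - intros m1 m2 m' [H1 ->] [H2 E]. eapply (Phi_inj la ra HY); eauto.
  - intros m H. eexists; split; eauto.
  - intros m' H. destruct (Phi_sur la ra HY _ _ _ m' Hw H) as [m [Y E]]. exists m; auto.
Defined.

Definition cF {Q : quiver} (la ra : qarr Q -> qarr Q -> qarr Q) (HY : YB la ra) : cfun Q (HG Q) :=
  @CFun Q (HG Q) (fun a : qobj Q => a)
    (fun w : word Q => match excluded_middle_informative (valid Q w) with
              | left Hw => mkF la ra HY w Hw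
              | right _ => hid (wsrc Q w) end).

Lemma cF_val {Q : quiver} (la ra : qarr Q -> qarr Q -> qarr Q) (HY : YB la ra) (w : word Q) : valid Q w ->
  hd (cf1 (cF la ra HY) w) = wsrc Q w /\ hc (cf1 (cF la ra HY) w) = wtgt Q w /\
  forall m m', hR (cf1 (cF la ra HY) w) m m' <-> (Yf (wtgt Q w) m /\ m' = Phi la (warr Q w) m).
Proof.
  intros Hw. simpl. destruct (excluded_middle_informative (valid Q w)); [|contradiction].
  simpl. split; auto. split; auto. tauto.
Qed.

Lemma cF_functor {Q : quiver} (la ra : qarr Q -> qarr Q -> qarr Q) (HY : YB la ra) : is_cfunctor Q la ra (cF la ra HY).
Proof.
  split; [|split; [|split; [|split]]].
  - intros w Hw. apply (cF_val la ra HY w Hw).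
  - intros w Hw. apply (cF_val la ra HY w Hw).
  - intros w w' Hw Hw' E.
    destruct (cF_val la ra HY w Hw) as [A1 [B1 C1]].
    destruct (cF_val la ra HY w' Hw') as [A2 [B2 C2]].
    destruct (eqC_inv la ra w w' E) as [E1 [E2 _]].
    apply HM_eq; [congruence|congruence|]. intros m m'. rewrite C1, C2.
    split; intros [H ->].
    + split; [rewrite <- E2; auto|]. apply (Phi_eqC la ra HY w w' E Hw); auto.
    + split; [rewrite E2; auto|]. symmetry. apply (Phi_eqC la ra HY w w' E Hw). rewrite E2; auto.
  - intros a. assert (Hv : valid Q (idw Q a)) by (red; simpl; auto).
    destruct (cF_val la ra HY _ Hv) as [A [B C]].
    apply HM_eq; auto.
  - intros f g Hf Hg E.
    pose proof (valid_cat f g Hf Hg E) as Hfg.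
    destruct (cF_val la ra HY _ Hfg) as [A [B C]].
    destruct (cF_val la ra HY _ Hf) as [A1 [B1 C1]].
    destruct (cF_val la ra HY _ Hg) as [A2 [B2 C2]].
    change (gcomp (HG Q) ?a ?b) with (hcomp a b).
    destruct (hcomp_R (cf1 (cF la ra HY) f) (cf1 (cF la ra HY) g) ltac:(congruence)) as [A3 [B3 C3]].
    apply HM_eq; [rewrite A, A3, A1; reflexivity|rewrite B, B3, B2; reflexivity|]. intros m m''. rewrite C, C3.
    setoid_rewrite C1. setoid_rewrite C2. simpl. rewrite Phi_app. split.
    + intros [H ->]. exists (Phi la (warr Q g) m). split; auto. split; auto.
      rewrite E. eapply Phi_Y; eauto.
    + intros [m' [[H ->] [_ ->]]]. auto.
Qed.

Lemma cF_faithful {Q : quiver} (la ra : qarr Q -> qarr Q -> qarr Q) (HY : YB la ra) (f g : word Q) : valid Q f -> valid Q g ->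
  cf1 (cF la ra HY) f = cf1 (cF la ra HY) g -> eqC Q la ra f g.
Proof.
  intros Hf Hg E.
  destruct (cF_val la ra HY _ Hf) as [A1 [B1 C1]].
  destruct (cF_val la ra HY _ Hg) as [A2 [B2 C2]].
  assert (Es : wsrc Q f = wsrc Q g) by (rewrite <- A1, <- A2, E; auto).
  assert (Et : wtgt Q f = wtgt Q g) by (rewrite <- B1, <- B2, E; auto).
  assert (H0 : hR (cf1 (cF la ra HY) g) (fun _ => 0%Z) (Phi la (warr Q f) (fun _ => 0%Z))).
  { rewrite <- E. apply C1. split; auto. intros z _; auto. }
  apply C2 in H0 as [_ H0].
  destruct f as [a l b], g as [a' l' b']. unfold valid in Hf, Hg. simpl in *.
  rewrite (Phi0 la ra HY _ _ _ Hf), (Phi0 la ra HY _ _ _ Hg) in H0.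
  apply (pi_inj la ra HY); auto. simpl.
  apply (Permutation_count_occ deq). intros z.
  apply (f_equal (fun h => h z)) in H0. lia.
Qed.

Lemma gp_frac (G : groupoid) U V Fm Gm : gcod G U = gdom G Fm -> gcod G V = gdom G Gm ->
  gdom G U = gdom G V -> gcomp G U Fm = gcomp G V Gm ->
  gcomp G Fm (ginv G Gm) = gcomp G (ginv G U) V.
Proof.
  intros H1 H2 H3 E.
  assert (EF : Fm = gcomp G (ginv G U) (gcomp G U Fm)).
  { rewrite <- gassoc; [| rewrite ginv_cod; auto | auto].
    rewrite ginv_l, H1, gid_l. auto. }
  rewrite EF, E.
  rewrite gassoc; [| rewrite ginv_cod, gcomp_dom; auto | rewrite gcomp_cod, ginv_dom; auto].
  rewrite gassoc; [| auto | rewrite ginv_dom; auto].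
  rewrite ginv_r, <- H2, gid_r. auto.
Qed.

Lemma eval_path_valid {Q : quiver} : forall ls a b, C_path Q a ls b ->
  valid Q (eval_path Q a ls) /\ wsrc Q (eval_path Q a ls) = a /\ wtgt Q (eval_path Q a ls) = b.
Proof.
  induction ls as [|g ls IH]; simpl; intros a b H.
  - subst. repeat split; red; simpl; auto.
  - destruct H as [Hg [<- H]]. destruct (IH _ _ H) as [A [B C]].
    split; [apply valid_cat; auto|]. simpl. auto.
Qed.

Lemma ld_lcm {Q : quiver} la ra : YB la ra -> forall (f g h u v : word Q),
  valid Q f -> valid Q g -> valid Q u -> valid Q v ->
  wtgt Q u = wsrc Q f -> wtgt Q v = wsrc Q g ->
  eqC Q la ra (cat Q u f) h -> eqC Q la ra (cat Q v g) h -> left_lcm Q la ra h f g ->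
  left_disjoint Q la ra u v.
Proof.
  intros HY f g h u v Hf Hg Hu Hv Eu Ev Hu2 Hv2 [Hh [_ [_ Hmin]]].
  pose proof (left_cancel la ra HY) as LC. pose proof (right_cancel la ra HY) as RC.
  destruct (eqC_inv la ra _ _ Hu2) as [Su [Tu _]]. destruct (eqC_inv la ra _ _ Hv2) as [Sv [Tv _]].
  simpl in Su, Tu, Sv, Tv.
  split; [congruence|].
  intros h0 h' Hh0 Hh' E0 [a [Ha [Ea Da]]] [b [Hb [Eb Db]]].
  destruct (eqC_inv la ra _ _ Da) as [Sa [Ta _]]. destruct (eqC_inv la ra _ _ Db) as [Sb [Tb _]].
  simpl in Sa, Ta, Sb, Tb.
  assert (Hab : eqC Q la ra (cat Q a f) (cat Q b g)).
  { apply (LC h'); auto.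
    - apply valid_cat; auto. congruence.
    - apply valid_cat; auto. congruence.
    - rewrite <- (cat_assoc h' a f), <- (cat_assoc h' b g).
      eapply eqC_trans; [apply eqC_catr; exact Da|].
      eapply eqC_trans; [|apply eqC_catr; apply eqC_sym; exact Db].
      rewrite !cat_assoc. apply eqC_catl. eapply eqC_trans; [exact Hu2|apply eqC_sym; exact Hv2]. }
  destruct (Hmin (cat Q a f)) as [w [Hw [Ew Dw]]].
  - apply valid_cat; auto. congruence.
  - exists a; split; auto. split; [congruence|]. apply eqC_refl.
  - exists b; split; auto. split; [congruence|]. apply eqC_sym; auto.
  - destruct (eqC_inv la ra _ _ Dw) as [Sw _]. simpl in Sw.
    assert (Hwu : eqC Q la ra (cat Q w u) a).
    { apply (RC f); auto.
      - apply valid_cat; auto. congruence.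
      - congruence.
      - rewrite cat_assoc. eapply eqC_trans; [apply eqC_catl; exact Hu2|]. exact Dw. }
    destruct (eqC_inv la ra _ _ Hwu) as [Swu _]. simpl in Swu.
    exists w. split; auto. split; [congruence|].
    apply (RC u); auto.
    + apply valid_cat; auto. congruence.
    + simpl. congruence.
    + rewrite cat_assoc. eapply eqC_trans; [apply eqC_catl; exact Hwu|]. exact Da.
Qed.

Lemma first_entry_fact {Q : quiver} la ra : forall x ts (u : word Q), C_path Q x ts (wtgt Q u) ->
  wsrc Q u = x -> eqC Q la ra (eval_path Q x ts) u ->
  wsrc Q (first_entry Q x ts) = x /\
  exists r, valid Q r /\ wtgt Q (first_entry Q x ts) = wsrc Q r /\ eqC Q la ra (cat Q (first_entry Q x ts) r) u.
Proof.
  intros x [|s ts] u Hc Hs E; simpl in *.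
  - split; auto. exists (idw Q x). split; [red; simpl; auto|]. split; auto.
  - destruct Hc as [Hv [Hsx Hc]]. split; auto.
    destruct (eval_path_valid ts _ _ Hc) as [A [B C]].
    exists (eval_path Q (wtgt Q s) ts). split; auto.
Qed.

Lemma ld_first {Q : quiver} la ra : forall x ts ss (u v : word Q),
  C_path Q x ts (wtgt Q u) -> C_path Q x ss (wtgt Q v) -> wsrc Q u = x -> wsrc Q v = x ->
  eqC Q la ra (eval_path Q x ts) u -> eqC Q la ra (eval_path Q x ss) v ->
  left_disjoint Q la ra u v -> left_disjoint Q la ra (first_entry Q x ts) (first_entry Q x ss).
Proof.
  intros x ts ss u v Ct Cs Su Sv Et Es [_ LD].
  destruct (first_entry_fact la ra x ts u Ct Su Et) as [S1 [r1 [R1 [T1 E1]]]].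
  destruct (first_entry_fact la ra x ss v Cs Sv Es) as [S2 [r2 [R2 [T2 E2]]]].
  split; [congruence|].
  intros h0 h' Hh0 Hh' E0 [k1 [K1 [F1 D1]]] [k2 [K2 [F2 D2]]].
  destruct (eqC_inv la ra _ _ D1) as [_ [G1 _]]. destruct (eqC_inv la ra _ _ D2) as [_ [G2 _]].
  simpl in G1, G2.
  apply LD; auto; [congruence| |].
  - exists (cat Q k1 r1). split; [apply valid_cat; auto; congruence|]. split; [simpl; auto|].
    rewrite <- cat_assoc. eapply eqC_trans; [apply eqC_catr; exact D1|].
    rewrite cat_assoc. apply eqC_catl; auto.
  - exists (cat Q k2 r2). split; [apply valid_cat; auto; congruence|]. split; [simpl; auto|].
    rewrite <- cat_assoc. eapply eqC_trans; [apply eqC_catr; exact D2|].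
    rewrite cat_assoc. apply eqC_catl; auto.
Qed.

Theorem proposition5p8 (Q : quiver) (lact ract : qarr Q -> qarr Q -> qarr Q) :
  involutive_nondegenerate_YB_map Q lact ract ->
  left_Ore Q lact ract /\
  (forall f g, valid Q f -> valid Q g -> wtgt Q f = wtgt Q g ->
     exists h, left_lcm Q lact ract h f g) /\
  (forall (G : groupoid) (iota : cfun Q G), is_enveloping Q lact ract G iota ->
     injective_cfun Q lact ract iota /\
     (forall S : word Q -> Prop,
        subfamily Q lact ract S -> garside_family Q lact ract S ->
        forall f g, valid Q f -> valid Q g -> wtgt Q f = wtgt Q g ->
        exists (x : qobj Q) (ts ss : list (word Q)),
          C_path Q x ts (wsrc Q f) /\ C_path Q x ss (wsrc Q g) /\
          sym_S_normal Q lact ract S x ts ss /\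
          gcomp G (cf1 iota f) (ginv G (cf1 iota g))
          = gcomp G (ginv G (cf1 iota (eval_path Q x ts)))
                    (cf1 iota (eval_path Q x ss)))).
Proof.
  intros HY. change (YB lact ract) in HY.
  split; [split; [apply left_cancel; auto|split; [apply right_cancel; auto|]]|].
  { intros f g Hf Hg E. apply left_common; auto. }
  split; [intros f g Hf Hg E; apply left_lcm_ex; auto|].
  intros G iota [Hiota Huniv].
  destruct (Huniv (HG Q) (cF lact ract HY) (cF_functor lact ract HY)) as [[P [HP [HP0 HP1]]] _].
  split.
  - intros f g Hf Hg E. apply (cF_faithful lact ract HY); auto.
    rewrite <- (HP1 f Hf), <- (HP1 g Hg), E. reflexivity.
  - intros S _ HS f g Hf Hg E.
    destruct (left_lcm_ex lact ract HY f g Hf Hg E) as [h Hl].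
    pose proof Hl as [Hh [[u [Hu [Eu1 Eu2]]] [[v [Hv [Ev1 Ev2]]] Hmin]]].
    destruct (eqC_inv _ _ _ _ Eu2) as [Su _]. destruct (eqC_inv _ _ _ _ Ev2) as [Sv _].
    simpl in Su, Sv.
    destruct (HS u Hu) as [ts [Cts [Nts Ets]]]. destruct (HS v Hv) as [ss [Css [Nss Ess]]].
    rewrite Sv, <- Su in Css, Ess.
    destruct (eval_path_valid _ _ _ Cts) as [Vt _]. destruct (eval_path_valid _ _ _ Css) as [Vs _].
    exists (wsrc Q u), ts, ss.
    split; [rewrite <- Eu1; auto|]. split; [rewrite <- Ev1; auto|].
    split.
    + split; [auto|split; [auto|]].
      apply (ld_first lact ract _ ts ss u v); auto; [congruence|].
      apply (ld_lcm lact ract HY f g h u v); auto.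
    + destruct Hiota as [Hd [Hc [Heq [Hid Hcat]]]].
      rewrite (Heq _ _ Vt Hu Ets), (Heq _ _ Vs Hv Ess).
      apply gp_frac.
      * rewrite Hc, Hd; auto. congruence.
      * rewrite Hc, Hd; auto. congruence.
      * rewrite Hd, Hd; auto. congruence.
      * rewrite <- Hcat, <- Hcat; auto. apply Heq; try (apply valid_cat; auto).
        eapply eqC_trans; [exact Eu2|]. apply eqC_sym; auto.
Qed.
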